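(* Let $\vec n,\vec m\in\mathbb{Z}_{\ge0}^M$ with $\sum_i n_i=\sum_i m_i=N$ and $\vec n\prec\vec m$. Let $v_{\vec x}=\prod_{i=1}^M\sqrt{x_i!/x_i^{x_i}}$ (with $0^0=1$). Then $v_{\vec m}\le v_{\vec n}$; consequently, for any $\epsilon>0$, the error bound $\mathcal{E}_{\vec n\preceq\vec m}=\epsilon\, v_{\vec m}/v_{\vec n}$ satisfies $\mathcal{E}_{\vec n\preceq\vec m}\le\epsilon$, with equality when $\vec m$ is a permutation of $\vec n$. Furthermore, if $\vec n_1,\vec n_2,\vec m_1,\vec m_2\in\mathbb{Z}_{\ge 0}^M$ all have entry sum $N$, then: (i) if $\vec n_1$ is a permutation of $\vec n_2$ and $\vec n_1\prec\vec m_1\prec\vec m_2$, then $\mathcal{E}_{\vec n_1\preceq\vec m_1}\ge\mathcal{E}_{\vec n_2\preceq\vec m_2}$; (ii) if $\vec n_1\prec\vec n_2\prec\vec m_1$ and $\vec m_1$ is a permutation of $\vec m_2$, then $\mathcal{E}_{\vec n_1\preceq\vec m_1}\le\mathcal{E}_{\vec n_2\preceq\vec m_2}$.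
   Context: Majorization: for vectors $\vec x,\vec y\in\mathbb{R}_{\ge 0}^d$ with entries sorted non-increasingly $x_{[1]}\ge\dots\ge x_{[d]}$, $y_{[1]}\ge\dots\ge y_{[d]}$, $\vec x\prec\vec y$ means $\sum_{i=1}^k x_{[i]}\le\sum_{i=1}^k y_{[i]}$ for all $1\le k<d$ and equality of the total sums. *)

(* Defs.v *)
(* Vectors in Z_{>=0}^M are M.-tuples of nat; the real numbers
   are modelled by an arbitrary real closed field R (needed for Num.sqrt). *)
From HB Require Import structures.
From mathcomp Require Import all_boot all_order all_algebra.
Set Implicit Arguments. Unset Strict Implicit. Unset Printing Implicit Defensive.
Import Order.TTheory GRing.Theory Num.Theory.

Definition sort_desc (x : seq nat) : seq nat := sort geq x.

Definition majorized (x y : seq nat) : Prop :=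
  (forall k : nat, (1 <= k)%N -> (k < size x)%N ->
     (sumn (take k (sort_desc x)) <= sumn (take k (sort_desc y)))%N)
  /\ sumn x = sumn y.

Local Open Scope ring_scope.

(* v_x = prod_i sqrt(x_i! / x_i^{x_i}), with 0^0 = 1 (as expn 0 0 = 1) *)
Definition vval (R : rcfType) (x : seq nat) : R :=
  \prod_(xi <- x) Num.sqrt ((xi`!)%:R / (xi ^ xi)%:R).

Definition errB (R : rcfType) (eps : R) (n m : seq nat) : R :=
  eps * vval R m / vval R n.

(* Main.v *)
Require Import Defs.
From HB Require Import structures.
From mathcomp Require Import all_boot all_order all_algebra.
From mathcomp Require Import ring lra zify.
From Stdlib Require Import Lia.
Import Order.TTheory GRing.Theory Num.Theory.
Local Open Scope ring_scope.

Section Num.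
Variable R : rcfType.

Lemma bern (c : R) n : 1 <= c -> c ^+ n * (c - n%:R) <= c * (c - 1) ^+ n.
Proof.
move=> c1; elim: n => [|n IH]; first by rewrite !expr0 subr0 mul1r mulr1.
have Q0 : 0 <= c ^+ n by apply: exprn_ge0; lra.
have hn : 0 <= n%:R :> R by apply: ler0n.
rewrite !exprS -natr1.
have h1 : (c - 1) * (c ^+ n * (c - n%:R)) <= (c - 1) * (c * (c - 1) ^+ n).
  by apply: ler_wpM2l => //; lra.
nra.
Qed.

Lemma key (t : nat) : ((t.+1)%:R ^+ (t.+1 + t) : R) <= t%:R ^+ t * (t.+2)%:R ^+ t.+1.
Proof.
case: t => [|t]; first by rewrite !expr0 !expr1 mul1r ler_nat.
set T : R := (t.+1)%:R.
have T1 : 1 <= T by rewrite /T ler1n.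
have -> : (t.+2)%:R = T + 1 :> R by rewrite /T -natr1.
have -> : (t.+3)%:R = T + 2 :> R by rewrite /T -!natr1; ring.
set c := T * (T + 2).
have c1 : 1 <= c by rewrite /c; nra.
have h1 := @bern c t.+1 c1.
rewrite -/T in h1.
set P := (c + 1) ^+ t.+1. set Q := c ^+ t.+1. set S := (c - 1) ^+ t.+1.
have Q0 : 0 < Q by apply: exprn_gt0; lra.
have P0 : 0 <= P by apply: exprn_ge0; lra.
have S0 : 0 <= S by apply: exprn_ge0; lra.
have PS : P * S <= Q * Q.
  rewrite /P /S /Q -!exprMn; apply: lerXn2r; rewrite ?nnegrE; nra.
have E1 : (T + 1) ^+ (t.+2 + t.+1) = P * (T + 1).
  rewrite addSn exprS exprD -exprMn -expr2 /P /c mulrC; congr (_ * _).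
  by congr (_ ^+ _); ring.
have E2 : T ^+ t.+1 * (T + 2) ^+ t.+2 = Q * (T + 2).
  by rewrite (exprSr (T+2)) /Q /c exprMn mulrA.
rewrite E1 E2.
have h2 : P * (Q * (c - t.+1%:R)) <= P * (c * S) by apply: ler_wpM2l.
have h3 : P * (c - T) <= c * Q.
  rewrite -(@ler_pM2l _ Q) //. rewrite -/T in h2. nra.
rewrite /c in h3. nra.
Qed.


Definition g (k : nat) : R := (k`!)%:R / (k ^ k)%:R.
Definition r (k : nat) : R := (k%:R / k.+1%:R) ^+ k.

Lemma g0 : g 0 = 1.
Proof. by rewrite /g fact0 expn0 divr1. Qed.

Lemma g_gt0 k : 0 < g k.
Proof. by rewrite /g divr_gt0 // ltr0n ?fact_gt0 // expn_gt0; case: k. Qed.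

Lemma g_rec k : g k.+1 = g k * r k.
Proof.
have nz : (k%:R ^+ k : R) != 0.
  by case: k => [|k]; rewrite ?expr0 ?oner_neq0 // expf_neq0 // pnatr_eq0.
have nz1 : (k.+1%:R : R) != 0 by rewrite pnatr_eq0.
rewrite /g /r factS natrM !natrX expr_div_n mulrA (divfK nz) exprS.
field; by rewrite expf_neq0 // addrC natr1.
Qed.

Lemma r_gt0 k : 0 < r k.
Proof.
case: k => [|k]; rewrite /r ?expr0 // exprn_gt0 // divr_gt0 // ltr0n.
Qed.

Lemma r_dec k : r k.+1 <= r k.
Proof.
rewrite /r !expr_div_n ler_pdivrMr ?exprn_gt0 ?ltr0n // mulrAC.
rewrite ler_pdivlMr ?exprn_gt0 ?ltr0n // -exprD; exact: key.

Qed.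

Definition rr k := Num.sqrt (r k).
Definition G k := Num.sqrt (g k).

Lemma rr_gt0 k : 0 < rr k.
Proof. by rewrite /rr sqrtr_gt0 r_gt0. Qed.

Lemma rr_dec k : rr k.+1 <= rr k.
Proof. by rewrite /rr ler_sqrt ?r_dec // ltW ?r_gt0. Qed.

Lemma G_rec k : G k.+1 = G k * rr k.
Proof. by rewrite /G g_rec sqrtrM // ltW ?g_gt0. Qed.

Lemma G_prod N v : (v <= N)%N -> G v = \prod_(0 <= t < N) rr t ^+ (t < v).
Proof.
elim: N v => [|N IH] v hv.
  by move: hv; rewrite leqn0 => /eqP ->; rewrite big_geq // /G g0 sqrtr1.
rewrite big_nat_recr //=.
case: (ltngtP N v) => hNv.
- have -> : v = N.+1 by apply/eqP; rewrite eqn_leq hv hNv.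
  rewrite G_rec (IH N) // expr1; congr (_ * _).
  by apply: eq_big_nat => t /andP [_ ht]; rewrite ht ltnS ltnW.
- by rewrite expr0 mulr1 IH // ltnW.
- by rewrite expr0 mulr1 IH // hNv.
Qed.

Lemma prod_count (c : R) (P : pred nat) x :
  \prod_(v <- x) c ^+ (P v) = c ^+ count P x.
Proof.
elim: x => [|v x IH]; first by rewrite big_nil.
by rewrite big_cons IH /= exprD.
Qed.

Lemma vprod N x : (forall v, v \in x -> v <= N)%N ->
  \prod_(v <- x) G v = \prod_(0 <= t < N) rr t ^+ count (fun v => t < v)%N x.
Proof.
move=> hx.
rewrite (eq_big_seq (fun v => \prod_(0 <= t < N) rr t ^+ (t < v))); last first.
  by move=> v /hx hv; rewrite (@G_prod N v hv).
rewrite exchange_big; apply: eq_bigr => t _; exact: prod_count.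
Qed.

Definition tsum (a : nat -> nat) m K := (\sum_(m <= s < K) a s)%N.

Lemma abel_gen (a b : nat -> nat) K d : forall m, (K - m)%N = d -> (m <= K)%N ->
  (forall t, (m <= t)%N -> (tsum a t K <= tsum b t K)%N) ->
  \prod_(m <= s < K) rr s ^+ b s <=
    \prod_(m <= s < K) rr s ^+ a s * rr m ^+ (tsum b m K - tsum a m K).
Proof.
elim: d => [|d IH] m hd hm hyp.
  have -> : m = K by apply/eqP; rewrite eqn_leq hm -subn_eq0 hd.
  by rewrite /tsum !big_geq // subnn expr0 mulr1.
have hmK : (m < K)%N by rewrite -subn_gt0 hd.
have IH' := IH m.+1 ltac:(lia) hmK (fun t ht => hyp t (ltnW ht)).
have h1 := hyp m.+1 (leqnSn m).
have h0 := hyp m (leqnn m).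
move: h0 IH'; rewrite /tsum !(big_ltn hmK) => h0.
set PA := \prod_(m.+1 <= s < K) rr s ^+ a s.
set PB := \prod_(m.+1 <= s < K) rr s ^+ b s.
set A' := (\sum_(m.+1 <= s < K) a s)%N.
set B' := (\sum_(m.+1 <= s < K) b s)%N.
move: h1; rewrite /tsum -/A' -/B' => h1.
move=> IH'.
have PA0 : 0 <= PA by apply: prodr_ge0 => i _; rewrite exprn_ge0 // ltW ?rr_gt0.
have hle : rr m.+1 ^+ (B' - A')%N <= rr m ^+ (B' - A')%N.
  by apply: lerXn2r; rewrite ?nnegrE ?rr_dec //; apply: ltW; apply: rr_gt0.
have IH2 : PB <= PA * rr m ^+ (B' - A')%N.
  by apply: (le_trans IH'); apply: ler_wpM2l.
have -> : (b m + B' - (a m + A'))%N = (b m + (B' - A')%N - a m)%N by lia.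
have E : (b m + (B' - A')%N)%N = (a m + (b m + (B' - A')%N - a m))%N by lia.
have rm0 : 0 <= rr m ^+ b m by rewrite exprn_ge0 // ltW ?rr_gt0.
apply: (le_trans (ler_wpM2l rm0 IH2)).
rewrite mulrCA -exprD {1}E exprD mulrCA mulrA.
by [].
Qed.
End Num.

Section Comb.
Local Open Scope nat_scope.

Definition h (x : seq nat) t := \sum_(v <- x) (v - t).

Lemma cnt_sum (P : pred nat) x : count P x = \sum_(v <- x) (P v : nat).
Proof. by elim: x => [|v x IH]; rewrite ?big_nil ?big_cons //= IH. Qed.

Lemma sum_lt v t N : \sum_(t <= s < N) (s < v : nat) = minn v N - t.
Proof.
elim: N => [|N IH]; first by rewrite big_geq //; lia.
case: (leqP t N) => htN.
  rewrite big_nat_recr //= IH; case: (ltnP N v) => /= hv; lia.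
by rewrite big_geq //; lia.
Qed.

Lemma count_tsum x t N : (forall v, v \in x -> v <= N) ->
  tsum (fun s => count (fun v => s < v) x) t N = h x t.
Proof.
move=> hx; rewrite /tsum /h.
rewrite (eq_bigr (fun s => \sum_(v <- x) (s < v : nat))); last by move=> s _; apply: cnt_sum.
rewrite exchange_big; apply: eq_big_seq => v /hx hv.
by rewrite sum_lt; congr (_ - _); apply/minn_idPl.
Qed.

Lemma geq_trans' : transitive geq.
Proof. by move=> a b c /= h1 h2; apply: leq_trans h2 h1. Qed.
Lemma geq_total' : total geq.
Proof. by move=> a b /=; apply: leq_total. Qed.

Lemma filter_nil a t s : all (geq a) s -> a <= t ->
  filter (fun v => t < v) s = [::].
Proof.
elim: s => [|y s IH] //= /andP [hy hs] hat.
by rewrite IH // ltnNge (leq_trans hy hat).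
Qed.

Lemma filter_take t s : sorted geq s ->
  filter (fun v => t < v) s = take (count (fun v => t < v) s) s.
Proof.
elim: s => [|a s IH] //= hs.
have hs' := path_sorted hs.
case: (ltnP t a) => /= hta; first by rewrite IH.
have hall := order_path_min geq_trans' hs.
have E := @filter_nil a t s hall hta.
by rewrite E -size_filter E.
Qed.

Lemma h_filter t s : h s t = h (filter (fun v => t < v) s) t.
Proof.
rewrite /h big_filter; symmetry; apply: big_rmcond => v; rewrite -leqNgt => hv.
by apply/eqP; rewrite subn_eq0.
Qed.

Lemma h_take k s t : h (take k s) t <= h s t.
Proof. by rewrite {2}/h -{2}(cat_take_drop k s) big_cat /= leq_addr. Qed.

Lemma h_all s t : (forall v, v \in s -> t <= v) -> h s t + size s * t = sumn s.
Proof.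
elim: s => [|v s IH] hs; first by rewrite /h big_nil.
rewrite /h big_cons /= -/(h s t).
have hv := hs v (mem_head _ _).
have := IH (fun w hw => hs w (ltac:(by rewrite in_cons hw orbT))). rewrite mulSn. move: (h s t) (size s * t) (sumn s) (v : nat) hv => a b c w hw; lia.
Qed.

Lemma h_ge s t : sumn s <= h s t + size s * t.
Proof.
elim: s => [|v s IH]; first by [].
rewrite /h big_cons /= -/(h s t); nia.
Qed.

Lemma maj_take x y k : size x = size y -> majorized x y -> k <= size x ->
  sumn (take k (sort_desc x)) <= sumn (take k (sort_desc y)).
Proof.
move=> hs [hm htot] hk.
case: (posnP k) => [->|k0]; first by rewrite !take0.
case: (ltnP k (size x)) => hk'; first exact: hm.
have ek : k = size x by apply/eqP; rewrite eqn_leq hk hk'.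
rewrite !take_oversize ?size_sort -?hs ?ek //.
by rewrite /sort_desc !(perm_sumn (permEl (perm_sort _ _))) htot.
Qed.

Lemma maj_h x y t : size x = size y -> majorized x y -> h x t <= h y t.
Proof.
move=> hs hm.
have px : h x t = h (sort_desc x) t by rewrite /h (perm_big _ (permEl (perm_sort _ _))).
have py : h y t = h (sort_desc y) t by rewrite /h (perm_big _ (permEl (perm_sort _ _))).
rewrite px py.
set sx := sort_desc x; set sy := sort_desc y.
have ssx : sorted geq sx by apply: sort_sorted; exact: geq_total'.
set k := count (fun v => t < v) sx.
have hk : k <= size sx by apply: count_size.
have szx : size sx = size x by rewrite size_sort.
have szy : size sy = size x by rewrite size_sort hs.
rewrite h_filter filter_take //.
have hA := @h_all (take k sx) t.
have hA' : h (take k sx) t + k * t = sumn (take k sx).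
  rewrite -{2}(size_takel hk); apply: hA => v hv.
  have : v \in filter (fun v => t < v) sx by rewrite filter_take.
  by rewrite mem_filter => /andP [/ltnW].
have hB := h_ge (take k sy) t.
rewrite size_takel ?szy -?szx // in hB.
have hM := @maj_take x y k hs hm ltac:(by rewrite -szx).
move: hM; rewrite -/sx -/sy => hM. have := h_take k sy t. change (h (take k sy) t <= h sy t -> h (take k sx) t <= h sy t). lia.
Qed.
End Comb.

Lemma le_sumn v x : v \in x -> (v <= sumn x)%N.
Proof.
elim: x => [|y x IH] //; rewrite in_cons => /orP [/eqP ->|/IH h] /=.
  exact: leq_addr.
exact: leq_trans h (leq_addl _ _).
Qed.

Lemma h0 x : h x 0 = sumn x.
Proof. by rewrite /h sumnE; apply: eq_bigr => v _; rewrite subn0. Qed.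

Lemma schur (R : rcfType) x y N : size x = size y -> sumn x = N -> sumn y = N ->
  majorized x y -> vval R y <= vval R x.
Proof.
move=> hs hx hy hm.
have -> : vval R x = \prod_(v <- x) G R v by [].
have -> : vval R y = \prod_(v <- y) G R v by [].
have bx : forall v, v \in x -> (v <= N)%N by move=> v /le_sumn; rewrite hx.
have bY : forall v, v \in y -> (v <= N)%N by move=> v /le_sumn; rewrite hy.
rewrite (@vprod R N x bx) (@vprod R N y bY).
have := @abel_gen R (fun s => count (fun v => s < v)%N x)
  (fun s => count (fun v => s < v)%N y) N N 0 (subn0 _) (leq0n _).
rewrite !count_tsum // !h0 hx hy subnn expr0 mulr1; apply.
by move=> t _; rewrite !count_tsum //; apply: maj_h.
Qed.

Lemma vval_gt0 (R : rcfType) x : 0 < vval R x.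
Proof.
by apply: prodr_gt0 => v _; rewrite sqrtr_gt0 (g_gt0 R v).
Qed.

Lemma vperm (R : rcfType) x y : perm_eq x y -> vval R x = vval R y.
Proof. by move=> hp; rewrite /vval (perm_big _ hp). Qed.

Theorem mainTheorem3 (R : rcfType) (M N : nat) :
  (forall n m : M.-tuple nat,
     sumn n = N -> sumn m = N -> majorized n m ->
     vval R m <= vval R n /\
     (forall eps : R, 0 < eps ->
        errB eps n m <= eps /\ (perm_eq n m -> errB eps n m = eps)))
  /\
  (forall (eps : R) (n1 n2 m1 m2 : M.-tuple nat), 0 < eps ->
     sumn n1 = N -> sumn n2 = N -> sumn m1 = N -> sumn m2 = N ->
     (perm_eq n1 n2 -> majorized n1 m1 -> majorized m1 m2 ->
        errB eps n2 m2 <= errB eps n1 m1)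
     /\
     (majorized n1 n2 -> majorized n2 m1 -> perm_eq m1 m2 ->
        errB eps n1 m1 <= errB eps n2 m2)).
Proof.
split.
  move=> n m hn hm hmaj.
  have le : vval R m <= vval R n.
    by apply: (@schur R _ _ N) => //; rewrite !size_tuple.
  have vn0 := vval_gt0 R n.
  split => // eps he; split.
    by rewrite /errB ler_pdivrMr // ler_wpM2l // ltW.
  by move=> hp; rewrite /errB (@vperm R _ _ hp) mulfK // gt_eqF // vval_gt0.
move=> eps n1 n2 m1 m2 he s1 s2 s3 s4; split.
  move=> hp h1 h2.
  have le : vval R m2 <= vval R m1.
    by apply: (@schur R _ _ N) => //; rewrite !size_tuple.
  rewrite /errB -(@vperm R _ _ hp); apply: ler_wpM2r.
    by rewrite invr_ge0 ltW // vval_gt0.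
  by apply: ler_wpM2l => //; rewrite ltW.
move=> h1 h2 hp.
have le : vval R n2 <= vval R n1.
  by apply: (@schur R _ _ N) => //; rewrite !size_tuple.
rewrite /errB -(@vperm R _ _ hp) -!mulrA; apply: ler_wpM2l; first by rewrite ltW.
apply: ler_wpM2l; first by rewrite ltW // vval_gt0.
by rewrite lef_pV2 ?posrE ?vval_gt0.
Qed.
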